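(* Fix an integer $m\ge1$ and define numbers $r_n$ by $\sum_{n\ge0} r_n x^n=\dfrac{1}{1-x-x^m}$. Then for every $n\ge m+1$, $$r_{n-m-1}=\sum_{(a_1,\dots,a_k)\in C(n)}\Bigl\lfloor\frac{a_1-1}{m}\Bigr\rfloor\cdots\Bigl\lfloor\frac{a_k-1}{m}\Bigr\rfloor,$$ where the only nonzero terms come from compositions in which every part is at least $m+1$.
   Context: $C(n)$ denotes the set of all compositions $(a_1,\dots,a_k)$ of $n$ (finite sequences of positive integers with sum $n$), with any number $k$ of parts. *)

(* Defs.v *)
From mathcomp Require Import all_boot all_order all_algebra.
Set Implicit Arguments. Unset Strict Implicit. Unset Printing Implicit Defensive.
Import GRing.Theory.
Local Open Scope ring_scope.

(* [is_gf_inverse m r] : the formal power series sum_n r n x^n satisfies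
   (1 - x - x^m) * (sum_n r n x^n) = 1, i.e. r is the coefficient sequence of
   1/(1 - x - x^m).  Coefficient of x^n of the product, written out. *)
Definition is_gf_inverse (m : nat) (r : nat -> int) : Prop :=
  forall n : nat,
    r n - (if (1 <= n)%N then r n.-1 else 0)
        - (if (m <= n)%N then r (n - m)%N else 0)
    = (if n == 0%N then 1 else 0).

Definition is_composition (n : nat) (s : seq nat) : bool :=
  all (fun a => (0 < a)%N) s && (sumn s == n).

(* Sum over C(n) of prod_i floor((a_i - 1)/m).  Every composition of n has
   k <= n parts, each part <= n, so C(n) is enumerated by k-tuples over 'I_(n+1)
   for k <= n. *)
Definition comp_floor_sum (m n : nat) : nat :=
  \sum_(k < n.+1)
    \sum_(t : k.-tuple 'I_n.+1 | is_composition n (map val t))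
      \prod_(a <- map val t) ((a - 1) %/ m)%N.

(* Main.v *)
Require Import Defs.
From mathcomp Require Import all_boot all_order all_algebra zify.

Definition w m a := ((a - 1) %/ m)%N.
Fixpoint g m k n : nat := match k with 0 => (n == 0 : nat) | k.+1 => \sum_(a < n.+1) w m a * g m k (n - a) end.
Definition T m k N n := \sum_(t : k.-tuple 'I_N | is_composition n (map val t)) \prod_(a <- map val t) w m a.

Lemma is_comp_cons n a s : is_composition n (a :: s) = (0 < a) && (a <= n) && is_composition (n - a) s.
Proof.
rewrite /is_composition /=. case: (leqP a n) => h.
- by rewrite -{1}(subnKC h) eqn_add2l !andbA andbT.
- have -> : (a + sumn s == n) = false.
    by apply/negbTE; rewrite neq_ltn (leq_trans h (leq_addr _ _)) orbT.
  by rewrite !andbF.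
Qed.

Lemma w0 m : w m 0 = 0.
Proof. by rewrite /w div0n. Qed.

Lemma T_g m k N n : n < N -> T m k N n = g m k n.
Proof.
elim: k n => [|k IH] n hn.
- rewrite /T /=. rewrite (eq_bigl (fun _ => n == 0)); last first.
    by move=> t; rewrite tuple0 /is_composition /= eq_sym.
  case: n hn => [|n] hn /=; last by rewrite big_pred0.
  rewrite (big_pred1 [tuple]); last by move=> t; apply/esym/eqP; exact: tuple0.
  by rewrite big_nil.
rewrite /T (reindex (fun p : 'I_N * k.-tuple 'I_N => [tuple of p.1 :: p.2])) /=; last first.
  exists (fun t : k.+1.-tuple 'I_N => (thead t, [tuple of behead t])).
    by move=> [a t] _ /=; rewrite theadE; congr pair; apply: val_inj.
  by move=> t _; rewrite [in RHS](tuple_eta t).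
transitivity (\sum_(a : 'I_N) \sum_(t : k.-tuple 'I_N | is_composition n (val a :: map val t)) \prod_(x <- val a :: map val t) w m x).
  by rewrite pair_big_dep.
transitivity (\sum_(a : 'I_N) (if (0 < val a) && (val a <= n) then w m a * g m k (n - a) else 0)).
  apply: eq_bigr => a _.
  case: ifP => ha.
  - rewrite -IH; last by rewrite (leq_ltn_trans (leq_subr _ _) hn).
    rewrite /T big_distrr /=. apply: eq_big => t.
      by rewrite is_comp_cons ha.
    by move=> _; rewrite big_cons.
  - by rewrite big_pred0 // => t; rewrite is_comp_cons ha.
rewrite /= (big_ord_widen N (fun a => w m a * g m k (n - a)) hn) [RHS]big_mkcond /=.
apply: eq_bigr => a _.
case: a => [[|a] ha] /=; first by rewrite w0 mul0n; case: (0 < n.+1).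
by rewrite ltnS.
Qed.
Lemma divS_lem c m : 0 < m -> c %/ m = (c-1)%/m + ((0<c) && (m %| c)).
Proof. move=> hm. case: c => [|c]. by rewrite div0n. rewrite /= subn1 /=.
have hr := ltn_pmod c hm. have E := divn_eq c m. set r := c %% m in hr E. set q := c %/ m in E *.
rewrite E. have -> : (q * m + r).+1 = q * m + r.+1 by rewrite addnS.
rewrite divnMDl // /dvdn modnMDl.
case: (ltngtP r.+1 m) => h.
- by rewrite divn_small // modn_small // addn0.
- by move: h; rewrite ltnNge hr.
- by rewrite h divnn hm modnn addn1.
Qed.

Definition h m n := \sum_(k < n.+1) g m k n.

Lemma cfs_h m n : comp_floor_sum m n = h m n.
Proof. by apply: eq_bigr => k _; exact: T_g. Qed.

Lemma g_small m k n : n < k -> g m k n = 0.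
Proof.
elim: k n => [|k IH] n //= hn.
apply: big1 => a _. case: a => [[|a] ha] /=; first by rewrite w0.
by rewrite IH ?muln0 //; lia.
Qed.

Lemma hsum m M b : b < M -> \sum_(k < M) g m k b = h m b.
Proof.
elim: M => [|M IH] // hb.
case: (ltngtP b M) => h1.
- by rewrite big_ord_recr /= IH // g_small // addn0.
- lia.
- by rewrite h1.
Qed.

Lemma h_rec m n : 0 < n -> h m n = \sum_(a < n.+1) w m a * h m (n - a).
Proof.
move=> hn. rewrite /h big_ord_recl /=. case: n hn => [|n] // _.
rewrite add0n /= exchange_big /=. apply: eq_bigr => a _.
rewrite -big_distrr /=. case: a => [[|a] ha] /=; first by rewrite w0 !mul0n.
by rewrite hsum //; lia.
Qed.

Lemma h_b m n : 0 < n -> h m n = \sum_(b < n.+1) w m (n - b) * h m b.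
Proof.
move=> hn. rewrite h_rec // (reindex_inj rev_ord_inj) /=.
apply: eq_bigr => b _. rewrite subSS subKn //. by rewrite -ltnS.
Qed.

Definition D m n := \sum_(b < n.+1) ((0 < n - b) && (m %| n - b)) * h m b.

Lemma h_diff m p : 0 < m -> 0 < p -> h m p.+1 = h m p + D m p.
Proof.
move=> hm hp. rewrite h_b // big_ord_recr /= subnn w0 mul0n addn0.
rewrite h_b // /D -big_split /=. apply: eq_bigr => b _.
have hb : b <= p by rewrite -ltnS.
rewrite -mulnDl. congr (_ * _).
by rewrite /w subSn // subn1 /= (divS_lem (p - b) m hm).
Qed.

Lemma D_rec m n : 0 < m -> m <= n -> D m n = h m (n - m) + D m (n - m).
Proof.
move=> hm hmn. rewrite /D -!(big_mkord xpredT (fun b => ((0 < _ - b) && (m %| _ - b)) * h m b)).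
rewrite (big_cat_nat (n := n - m)) //=; last by lia.
rewrite [in RHS]big_nat_recr //= subnn /= mul0n addn0 [RHS]addnC. congr (_ + _).
- apply: eq_big_nat => b hb.
  have -> : n - b = (n - m - b) + m by lia.
  rewrite dvdn_addl ?dvdnn //. congr (((_ : bool) : nat) * _).
  by apply/idP/idP; case/andP => _ ->; rewrite andbT; lia.
- rewrite big_ltn; last by lia.
  have -> : n - (n - m) = m by lia.
  rewrite hm dvdnn /= mul1n big1_seq ?addn0 // => b /andP [_].
  rewrite mem_index_iota => hb.
  case: (boolP (0 < n - b)) => //= h0.
  have : ~~ (m %| n - b).
    by apply/negP => /(dvdn_leq h0); lia.
  by move/negbTE => ->.
Qed.

Lemma h_step m n : 0 < m -> m.+1 <= n -> h m n.+1 = h m n + h m (n.+1 - m).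
Proof.
move=> hm hn. rewrite h_diff //; last by lia.
rewrite D_rec //; last by lia.
have -> : n.+1 - m = (n - m).+1 by lia.
rewrite (h_diff m (n - m)) //; lia.
Qed.

Lemma h0 m : h m 0 = 1.
Proof. by rewrite /h big_ord1. Qed.

Lemma h_small m n : 0 < n <= m -> h m n = 0.
Proof.
move=> /andP [h1 h2]. rewrite h_rec //. apply: big1 => a _.
rewrite /w divn_small ?mul0n //. have := ltn_ord a. lia.
Qed.

Lemma h_m1 m : 0 < m -> h m m.+1 = 1.
Proof.
move=> hm. rewrite h_rec // big_ord_recr /= subnn h0 muln1 /w subn1 /= divnn hm.
rewrite big1 // => a _. rewrite /w divn_small ?mul0n //. have := ltn_ord a. lia.
Qed.

Import GRing.Theory.
Local Open Scope ring_scope.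

Theorem proposition7 (m : nat) (r : nat -> int) :
  (1 <= m)%N -> is_gf_inverse m r ->
  forall n : nat, (m.+1 <= n)%N ->
    r (n - m.+1)%N = ((comp_floor_sum m n)%:Z).
Proof.
move=> hm hr n hn. rewrite cfs_h.
suff key : forall j, r j = (h m (j + m.+1)%N)%:Z.
  by rewrite key subnK.
move=> j. elim: j {-2}j (leqnn j) => [|J IH] j hj.
  have -> : j = 0 by lia.
  have := hr 0%N. rewrite /= leqn0. have -> : (m == 0%N) = false by lia.
  rewrite !subr0 => ->. by rewrite add0n h_m1.
case: j hj => [|j] hj.
  have := hr 0%N. rewrite /= leqn0. have -> : (m == 0%N) = false by lia.
  rewrite !subr0 => ->. by rewrite add0n h_m1.
have := hr j.+1. rewrite /= => /eqP. rewrite subr_eq0 subr_eq => /eqP ->.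
have -> : (j.+1 + m.+1 = (j + m.+1).+1)%N by lia.
rewrite h_step //; last by lia.
rewrite PoszD addrC. congr (_ + _).
  by rewrite IH //; lia.
have -> : ((j + m.+1).+1 - m = j.+2)%N by lia.
case: ifP => hmj.
- rewrite IH; last by lia. congr (Posz (h m _)). lia.
- by rewrite h_small //; lia.
Qed.
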